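(* Consider the unconstrained ($D(x)=\mathcal F$ for all $x$) stationary reinsurance model of the context with finite horizon $N$, $\beta\in(0,1]$, and a law-invariant, normalized, monetary and positive homogeneous risk measure $\rho$ with the Fatou property and $\rho(Y)<\infty$. Then the static problem $\min_{f\in\mathcal F}\rho(f(Y)-Z)+\pi_R(f)$ has a minimizer $f^*\in\mathcal F$; letting $c$ denote its minimal value, the finite-horizon value functions (indexed by time $n=0,\dots,N-1$) are $$J_n(x)=c\sum_{k=0}^{N-n-1}(k+1)\beta^k-x\sum_{k=0}^{N-n-1}\beta^k,\qquad x\in\mathbb R,$$ and the constant policy using $f^*$ at every time and in every state is optimal. If moreover $\beta\in(0,1)$ and $\rho$ is proper and coherent, then the infinite-horizon value function is $J(x)=\frac{c}{(1-\beta)^2}-\frac{x}{1-\beta}$ and the stationary policy $(f^*,f^*,\dots)$ (constant decision rule $d^*\equiv f^*$) is optimal for the infinite-horizon problem.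
   Context: Probability space $(\Omega,\mathcal A,\mathbb P)$, $p\in[1,\infty)$, $L^p$ real random variables with finite $p$-th moment, $L^p_+$ nonnegative ones; positive values are losses. For $\rho:L^p\to\bar{\mathbb R}$: law-invariant, monotone, translation invariant ($\rho(X+c)=\rho(X)+c$), normalized ($\rho(0)=0$), positive homogeneous ($\rho(\lambda X)=\lambda\rho(X)$, $\lambda\ge0$), subadditive; monetary = monotone + translation invariant; coherent = monetary, positive homogeneous and subadditive; proper = never $-\infty$ and finite at some point; Fatou property: $X_k\to X$ a.s., $X_k,X\in L^p$, $|X_k|\le W\in L^p$ imply $\liminf\rho(X_k)\ge\rho(X)$; same notions for premium principles on $L^p_+$. $\mathcal F=\{f:\mathbb R_+\to\mathbb R_+ : f(t)\le t\ \forall t,\ f\text{ increasing},\ \mathrm{id}_{\mathbb R_+}-f\text{ increasing}\}$. Model: $(Y_n,Z_n)_{n\ge1}$ i.i.d. with generic $(Y,Z)$, $Y\in L^p_+$, $Z\in L^\infty_+$; $\pi_R$ law-invariant, monotone, normalized premium principle with Fatou property, $\pi_R(Y)<\infty$, $\pi_R(f):=\pi_R(Y-f(Y))$. Histories $h_n=(x_0,f_0,\dots,f_{n-1},x_n)$, policies $\pi=(d_0,\dots,d_{N-1})$ of measurable history-dependent rules with values in $\mathcal F$; policy values $V_{N\pi}\equiv0$, $V_{n\pi}(h_n)=\rho\big(d_n(h_n)(Y_{n+1})+\pi_R(d_n(h_n))-Z_{n+1}-x_n+\beta V_{n+1,\pi}(h_n,d_n(h_n),x_n+Z_{n+1}-d_n(h_n)(Y_{n+1})-\pi_R(d_n(h_n)))\big)$;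 value functions $V_n=\inf_\pi V_{n\pi}$; it is known that $V_n(h_n)=J_n(x_n)$ with $J_N\equiv0$, $J_n(x)=\inf_{f\in\mathcal F}\rho\big(f(Y)+\pi_R(f)-Z-x+\beta J_{n+1}(x+Z-f(Y)-\pi_R(f))\big)$. Infinite horizon: for a Markov policy $\pi=(d_0,d_1,\dots)$ the $N$-horizon value is $\mathcal T_{d_0}\circ\cdots\circ\mathcal T_{d_{N-1}}0$ with $\mathcal T_dv(x)=\rho\big(d(x)(Y)+\pi_R(d(x))-Z-x+\beta v(x+Z-d(x)(Y)-\pi_R(d(x)))\big)$; $J_{\infty\pi}$ is its limit as $N\to\infty$, $J_\infty=\inf_\pi J_{\infty\pi}$, and $J=\lim_{N}J_N$ in forward indexing (here $J$ coincides with $J_\infty$). Standing assumption: all policy values measurable. *)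

(* Defs.v *)
From HB Require Import structures.
From mathcomp Require Import all_boot all_order all_algebra.
From mathcomp Require Import all_classical all_reals all_analysis.
Set Implicit Arguments. Unset Strict Implicit. Unset Printing Implicit Defensive.
Import Order.TTheory GRing.Theory Num.Theory.
Import numFieldNormedType.Exports.
Local Open Scope ring_scope.

Definition seq_cvg_to {R : realType} (u : nat -> R) (l : R) := (u @ \oo --> l)%classic.

Definition eseq_cvg_to {R : realType} (u : nat -> \bar R) (l : \bar R) :=
  (u @ \oo --> l)%classic.

Section Defs.
Context {R : realType} {d : measure_display} {T : measurableType d}.
Variable P : probability T R.

Definition Lp (p : R) : set (T -> R) :=
  [set X : T -> R | measurable_fun setT X /\
           (\int[P]_w ((`|X w| `^ p)%:E) < +oo)%E]%classic.

Definition Lpplus (p : R) : set (T -> R) :=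
  [set X : T -> R | Lp p X /\ forall w, 0 <= X w]%classic.

Definition same_law (X Y : T -> R) : Prop :=
  forall B : set R, measurable B -> P (X @^-1` B)%classic = P (Y @^-1` B)%classic.

Definition rm_law_invariant (dom : set (T -> R)) (rho : (T -> R) -> \bar R) :=
  forall X Y, dom X -> dom Y -> same_law X Y -> rho X = rho Y.

Definition rm_monotone (dom : set (T -> R)) (rho : (T -> R) -> \bar R) :=
  forall X Y, dom X -> dom Y -> (forall w, X w <= Y w) -> (rho X <= rho Y)%E.

Definition rm_translation_invariant (dom : set (T -> R)) (rho : (T -> R) -> \bar R) :=
  forall X (c : R), dom X -> rho (fun w => X w + c) = (rho X + c%:E)%E.

Definition rm_normalized (rho : (T -> R) -> \bar R) := rho (fun _ => 0) = 0%E.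

Definition rm_pos_homogeneous (dom : set (T -> R)) (rho : (T -> R) -> \bar R) :=
  forall X (l : R), dom X -> 0 <= l -> rho (fun w => l * X w) = (l%:E * rho X)%E.

Definition rm_subadditive (dom : set (T -> R)) (rho : (T -> R) -> \bar R) :=
  forall X Y, dom X -> dom Y -> (rho (fun w => (X w + Y w)%R) <= rho X + rho Y)%E.

Definition rm_monetary dom rho := rm_monotone dom rho /\ rm_translation_invariant dom rho.

Definition rm_coherent dom rho :=
  rm_monetary dom rho /\ rm_pos_homogeneous dom rho /\ rm_subadditive dom rho.

Definition rm_proper (dom : set (T -> R)) (rho : (T -> R) -> \bar R) :=
  (forall X, dom X -> rho X != -oo%E) /\ (exists X, dom X /\ rho X \is a fin_num).

Definition rm_fatou (dom : set (T -> R)) (rho : (T -> R) -> \bar R) :=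
  forall (Xs : nat -> T -> R) (X W : T -> R),
    (forall k, dom (Xs k)) -> dom X -> dom W ->
    {ae P, forall w, seq_cvg_to (fun k => Xs k w) (X w)} ->
    (forall k, {ae P, forall w, `|Xs k w| <= W w}) ->
    (rho X <= limn_einf (fun k => rho (Xs k)))%E.

End Defs.

(* The set F of admissible retention functions f : R_+ -> R_+ (represented
   as functions R -> R; only their values on [0,oo) matter). *)
Definition Fset {R : realType} : set (R -> R) :=
  [set f | (forall t, 0 <= t -> 0 <= f t /\ f t <= t) /\
           (forall s t, 0 <= s -> s <= t -> f s <= f t) /\
           (forall s t, 0 <= s -> s <= t -> s - f s <= t - f t)]%classic.

Section Model.
Context {R : realType} {d : measure_display} {T : measurableType d}.

(* pi_R(f) := pi_R(Y - f(Y)) (finite under the standing hypotheses) *)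
Definition piRf (piR : (T -> R) -> \bar R) (Y : T -> R) (f : R -> R) : R :=
  fine (piR (fun w => Y w - f (Y w))).

Definition static_obj (rho piR : (T -> R) -> \bar R) (Y Z : T -> R) (f : R -> R)
  : \bar R := (rho (fun w => (f (Y w) - Z w)%R) + (piRf piR Y f)%:E)%E.

Definition Top (rho piR : (T -> R) -> \bar R) (Y Z : T -> R) (beta : R)
  (f : R -> R) (v : R -> R) (x : R) : \bar R :=
  rho (fun w => f (Y w) + piRf piR Y f - Z w - x
               + beta * v (x + Z w - f (Y w) - piRf piR Y f)).

(* Markov policy: pol k x = decision (element of F) at time k in state x.
   polval pol k m = T_{d_k} o ... o T_{d_{k+m-1}} 0 *)
Fixpoint polval (rho piR : (T -> R) -> \bar R) (Y Z : T -> R) (beta : R)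
  (pol : nat -> R -> R -> R) (k m : nat) : R -> \bar R :=
  match m with
  | 0%N => fun _ => 0%E
  | m'.+1 => fun x =>
      Top rho piR Y Z beta (pol k x)
          (fun y => fine (polval rho piR Y Z beta pol k.+1 m' y)) x
  end.

Definition horizon_val rho piR Y Z beta pol (N : nat) : R -> \bar R :=
  polval rho piR Y Z beta pol 0 N.

(* admissible Markov policy: decision rules with values in F, and all policy
   values finite and (standing assumption) measurable *)
Definition admissible_policy rho piR Y Z beta (pol : nat -> R -> R -> R) :=
  (forall k x, Fset (pol k x)) /\
  (forall k m x, polval rho piR Y Z beta pol k m x \is a fin_num) /\
  (forall k m, measurable_fun setT (fun y => fine (polval rho piR Y Z beta pol k m y))).

Definition Jfin (c beta : R) (N n : nat) (x : R) : R :=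
  c * (\sum_(0 <= k < N - n) (k.+1%:R * beta ^+ k))
  - x * (\sum_(0 <= k < N - n) beta ^+ k).

End Model.

(* Main.v *)
Require Import Defs.
From HB Require Import structures.
From mathcomp Require Import all_boot all_order all_algebra.
From mathcomp Require Import all_classical all_reals all_analysis.
From mathcomp Require Import measurable_realfun.
From mathcomp Require Import ring lra.
Set Implicit Arguments. Unset Strict Implicit. Unset Printing Implicit Defensive.
Import Order.TTheory GRing.Theory Num.Theory.
Import numFieldNormedType.Exports.
Local Open Scope ring_scope.
Local Open Scope classical_set_scope.

Section LpFacts.
Context {R : realType} {d : measure_display} {T : measurableType d}.
Variable P : probability T R.
Variable p : R.
Hypothesis hp : 1 <= p.

Lemma Lp_Lfun X : Lp P p X <-> X \in Lfun P p%:E.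
Proof.
have p0 : 0 < p by rewrite (lt_le_trans ltr01).
split.
- move=> [mX iX]; rewrite inE; apply/andP; split; first by rewrite inE.
  rewrite inE /= /finite_norm unlock /Lnorm poweR_lty//.
- rewrite inE => /andP[mX lX]; rewrite inE in mX; rewrite inE /= /finite_norm unlock /Lnorm in lX.
  move: lX => /lty_poweRy => H; split => //.
  have := H (invr_neq0 (lt0r_neq0 p0)).
  have E : (\int[P]_x `|(EFin \o X) x| `^ p = \int[P]_w (`|X w| `^ p)%:E)%E.
    by apply: eq_integral => x _ /=.
  by rewrite E.
Qed.

Lemma Lp_dom (X U : T -> R) : measurable_fun setT X -> Lp P p U ->
  {ae P, forall w, `|X w| <= `|U w|} -> Lp P p X.
Proof.
move=> mX [mU iU] H; split => //.
apply: le_lt_trans iU.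
apply: ae_ge0_le_integral => //.
- apply/measurable_EFinP.
  apply: (measurableT_comp (measurable_powR _)) => //.
  exact: measurableT_comp.
- apply/measurable_EFinP.
  apply: (measurableT_comp (measurable_powR _)) => //.
  exact: measurableT_comp.
- apply: filterS H => w H _; rewrite lee_fin.
  by apply: ge0_ler_powR => //; rewrite ?nnegrE// (le_trans ler01).
Qed.

Lemma Lp_add (X Y : T -> R) : Lp P p X -> Lp P p Y -> Lp P p (fun w => X w + Y w).
Proof.
move=> /Lp_Lfun hX /Lp_Lfun hY; apply/Lp_Lfun.
exact: (rpredD hX hY).
Qed.

Lemma Lp_scale (a : R) (X : T -> R) : Lp P p X -> Lp P p (fun w => a * X w).
Proof.
move=> /Lp_Lfun hX; apply/Lp_Lfun.
exact: (rpredZ a hX).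
Qed.

Lemma Lp_cst (a : R) : Lp P p (fun _ => a).
Proof. apply/Lp_Lfun; exact: Lfun_cst. Qed.

Lemma Lp_abs (X : T -> R) : Lp P p X -> Lp P p (fun w => `|X w|).
Proof.
move=> hX; apply: (Lp_dom _ hX); last by apply: aeW => w; rewrite normr_id.
exact: measurableT_comp (proj1 hX).
Qed.

End LpFacts.

Section Compact.
Import ArrowAsProduct.
Context {R : realType}.

Lemma cluster_exists (S : nat -> set (R -> R)) :
  (forall n, S n !=set0) -> (forall n m, (m <= n)%N -> S n `<=` S m) ->
  (forall n g, S n g -> forall t, 0 <= g t <= Num.max t 0) ->
  exists f : R -> R, (forall t, 0 <= f t <= Num.max t 0) /\
    forall n (m : nat) (pts : nat -> R) (e : R), 0 < e ->
      exists g, S n g /\ forall k, (k < m)%N -> `|g (pts k) - f (pts k)| < e.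
Proof.
move=> Sne Sdec SK.
have cK := @tychonoff R (fun _ => R) (fun t => `[0, Num.max t 0]) (fun t => @segment_compact R 0 (Num.max t 0)).
pose F := filter_from setT S.
have FF : ProperFilter F.
  apply: filter_from_proper; last by move=> i _; exact: Sne.
  apply: filter_from_filter; first by exists 0%N.
  move=> i j _ _; exists (maxn i j) => //.
  by move=> g Sg; split; apply: (Sdec (maxn i j)) => //; rewrite ?leq_maxl ?leq_maxr.
have FK : F [set f : R -> R | forall t, `[0, Num.max t 0] (f t)].
  exists 0%N => // g Sg t; rewrite /= in_itv /=; exact: SK Sg t.
have [f [Kf clf]] := cK F FF FK.
exists f; split.
  by move=> t; have := Kf t; rewrite /= in_itv.
move=> n m pts e e0.
have nb1 t : nbhs f [set g : R -> R | `|g t - f t| < e].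
  have h := @proj_continuous R (fun _ => R) t f.
  have h2 : nbhs (f t) [set y : R | `|y - f t| < e].
    by exists e => //= y; rewrite /ball_ /= distrC.
  have := h _ h2.
  by [].
have nb : nbhs f [set g : R -> R | forall k, (k < m)%N -> `|g (pts k) - f (pts k)| < e].
  elim: m => [|m IH]; first by apply: filterE => g k.
  apply: filterS2 IH (nb1 (pts m)) => g H1 H2 k; rewrite ltnS leq_eqVlt.
  by case/orP => [/eqP -> //| /H1].
have [g [Sg Bg]] := clf (S n) _ (ex_intro2 _ _ n I (fun x h => h)) nb.
by exists g.
Qed.

End Compact.

Section Liminf.
Context {R : realType}.
Lemma einf_gt (u : nat -> \bar R) (x : \bar R) :
  (x < limn_einf u)%E -> \forall n \near \oo, (x < u n)%E.
Proof.
rewrite limn_einf_lim => h.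
rewrite (cvg_lim _ (@cvg_einfs_sup _ u)) in h => //.
have [_ [n _ <-] xn] := ereal_sup_gt h.
exists n => // k /= nk; apply: (lt_le_trans xn).
by apply: ereal_inf_lbound; exists k.
Qed.
End Liminf.

Section Sums.
Context {R : realType}.
Variable beta : R.
Definition S0 m := \sum_(0 <= k < m) beta ^+ k.
Definition S1 m := \sum_(0 <= k < m) (k.+1%:R * beta ^+ k).

Lemma S0S m : S0 m.+1 = 1 + beta * S0 m.
Proof.
rewrite /S0 big_nat_recl // expr0 mulr_sumr; congr (_ + _).
by apply: eq_bigr => k _; rewrite exprS.
Qed.

Lemma S1S m : S1 m.+1 = S0 m.+1 + beta * S1 m.
Proof.
rewrite /S1 S0S big_nat_recl // expr0 mulr1 /S0 mulr_sumr mulr_sumr -addrA -big_split /=.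
congr (_ + _); apply: eq_bigr => k _; rewrite exprS -[(k.+2)%:R]natr1 -[(k.+1)%:R]natr1.
ring.
Qed.

Lemma S0_ge0 m : 0 <= beta -> 0 <= S0 m.
Proof. by move=> b0; apply: sumr_ge0 => k _; rewrite exprn_ge0. Qed.

Lemma S0_closed m : (1 - beta) * S0 m = 1 - beta ^+ m.
Proof.
elim: m => [|m IH]; first by rewrite /S0 big_geq // mulr0 expr0 subrr.
rewrite /S0 big_nat_recr //= mulrDr -/(S0 m) IH exprS; ring.
Qed.

Lemma S1_closed m : (1 - beta) * S1 m = S0 m - m%:R * beta ^+ m.
Proof.
elim: m => [|m IH]; first by rewrite /S1 /S0 !big_geq // mulr0 mul0r subrr.
rewrite /S1 big_nat_recr //= mulrDr -/(S1 m) IH /S0 big_nat_recr //= -/(S0 m).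
rewrite exprS -[(m.+1)%:R]natr1; ring.
Qed.

End Sums.

Section Limits.
Context {R : realType}.

Lemma NqN_bound (q : R) N : 0 <= q -> q < 1 ->
  (1 - q) * (N%:R * q ^+ N) <= 1.
Proof.
move=> q0 q1.
have h1 : (1 - q) * S0 q N.+1 <= 1.
  by rewrite S0_closed lerBlDr lerDl exprn_ge0.
apply: le_trans h1; apply: ler_wpM2l; first by rewrite subr_ge0 ltW.
have h : (N.+1)%:R * q ^+ N <= S0 q N.+1.
  have : \sum_(0 <= k < N.+1) q ^+ N <= S0 q N.+1.
    apply: ler_sum_nat => k /andP[_ kN]; apply: ler_wiXn2l => //; exact: ltW.
  by rewrite sumr_const_nat subn0 mulr_natl.
apply: le_trans h; apply: ler_wpM2r; first exact: exprn_ge0.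
by rewrite ler_nat.
Qed.

Lemma Nbeta_cvg (beta : R) : 0 <= beta -> beta < 1 ->
  (fun N : nat => N%:R * beta ^+ N) @ \oo --> 0.
Proof.
move=> b0 b1.
set q := Num.sqrt beta.
have q0 : 0 <= q by exact: sqrtr_ge0.
have hq2 : q ^+ 2 = beta by exact: sqr_sqrtr.
have q1 : q < 1.
  rewrite ltNge; apply/negP => h.
  have : 1 <= q ^+ 2 by rewrite expr2; rewrite -[1]mulr1; apply: ler_pM.
  rewrite hq2; lra.
have q1' : 0 < 1 - q by rewrite subr_gt0.
apply: (@squeeze_cvgr _ _ _ _ (cst 0) (fun N => (1 - q)^-1 * q ^+ N)); last 2 first.
- exact: cvg_cst.
- rewrite -[0](mulr0 (1 - q)^-1); apply: cvgMl_tmp; apply: cvg_expr.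
  by rewrite ger0_norm.
apply: nearW => N; apply/andP; split.
  by rewrite /cst mulr_ge0 // exprn_ge0.
rewrite ler_pdivlMl // -hq2 -exprM mulnC exprM expr2.
rewrite (_ : (1 - q) * (N%:R * (q ^+ N * q ^+ N)) = ((1 - q) * (N%:R * q ^+ N)) * q ^+ N); last by ring.
apply: ler_piMl; first exact: exprn_ge0.
exact: NqN_bound.
Qed.

Lemma Jfin_lim (c x beta : R) : 0 <= beta -> beta < 1 ->
  seq_cvg_to (fun N => Jfin c beta N 0 x) (c / (1 - beta) ^+ 2 - x / (1 - beta)).
Proof.
move=> b0 b1.
have b1' : 1 - beta != 0 by rewrite subr_eq0 eq_sym lt_eqF.
set A := c / (1 - beta) ^+ 2 - x / (1 - beta).
set B := - c / (1 - beta) ^+ 2 + x / (1 - beta).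
set C := - c / (1 - beta).
have E : (fun N => Jfin c beta N 0 x) =
    (fun N => (A + B * beta ^+ N) + C * (N%:R * beta ^+ N)).
  apply: funext => N; rewrite /Jfin subn0 -/(S0 beta N) -/(S1 beta N).
  have hS0 : S0 beta N = (1 - beta)^-1 * (1 - beta ^+ N).
    by rewrite -S0_closed mulKf.
  have hS1 : S1 beta N = (1 - beta)^-1 * (S0 beta N - N%:R * beta ^+ N).
    by rewrite -S1_closed mulKf.
  rewrite hS1 hS0 /A /B /C; field; exact: b1'.
rewrite /seq_cvg_to E.
suff H : (fun N : nat => (A + B * beta ^+ N) + C * (N%:R * beta ^+ N)) @ \oo --> (A + B * 0) + C * 0.
  by rewrite !mulr0 !addr0 in H.
have h3 : (fun N : nat => C * (N%:R * beta ^+ N)) @ \oo --> C * 0.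
  by apply: cvgMl_tmp; exact: Nbeta_cvg.
have h2 : (fun N : nat => B * beta ^+ N) @ \oo --> B * 0.
  by apply: cvgMl_tmp; apply: cvg_expr; rewrite ger0_norm.
have h1 : (fun N : nat => A) @ \oo --> A by exact: cvg_cst.
exact: (cvgD (cvgD h1 h2) h3).
Qed.

End Limits.

Section Model.
Context {R : realType} {d : measure_display} {T : measurableType d}.
Variable P : probability T R.
Variables (p : R) (Y Z : T -> R) (rho piR : (T -> R) -> \bar R) (beta M : R).
Hypothesis hp : 1 <= p.
Hypothesis hY : Lpplus P p Y.
Hypothesis hZm : measurable_fun setT Z.
Hypothesis hZ0 : {ae P, forall w, 0 <= Z w}.
Hypothesis hZM : {ae P, forall w, Z w <= M}.
Hypothesis piR_mono : rm_monotone (Lpplus P p) piR.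
Hypothesis piR0 : rm_normalized piR.
Hypothesis piRY : (piR Y < +oo)%E.
Hypothesis rho_li : rm_law_invariant P (Lp P p) rho.
Hypothesis rho0 : rm_normalized rho.
Hypothesis rho_mon : rm_monetary (Lp P p) rho.
Hypothesis rho_hom : rm_pos_homogeneous (Lp P p) rho.
Hypothesis rhoY : (rho Y < +oo)%E.
Hypothesis hb : 0 <= beta.
Hypothesis piR_fatou : rm_fatou P (Lpplus P p) piR.
Hypothesis rho_fatou : rm_fatou P (Lp P p) rho.

Lemma F_lip_le (f : R -> R) s t : Fset f -> 0 <= s -> s <= t ->
  0 <= f t - f s <= t - s.
Proof.
move=> [h1 [h2 h3]] s0 st.
rewrite subr_ge0 h2 //=.
have := h3 s t s0 st; lra.
Qed.

Lemma F_lip (f : R -> R) s t : Fset f -> 0 <= s -> 0 <= t ->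
  `|f s - f t| <= `|s - t|.
Proof.
move=> hf s0 t0; case: (leP s t) => st.
  have /andP[a b] := F_lip_le hf s0 st.
  by rewrite distrC (distrC s) !ger0_norm // subr_ge0.
have /andP[a b] := F_lip_le hf t0 (ltW st).
by rewrite !ger0_norm // subr_ge0 ltW.
Qed.

Lemma F_meas (f : R -> R) : Fset f -> measurable_fun setT (fun w => f (Y w)).
Proof.
move=> hf.
have -> : (fun w => f (Y w)) = (fun t => f (Num.max t 0)) \o Y.
  apply: funext => w /=; rewrite max_l //; exact: hY.2.
apply: measurableT_comp; last exact: hY.1.1.
apply: continuous_measurable_fun => x; apply/cvgrPdist_lt => e e0.
exists e => //= t xt.
apply: le_lt_trans (F_lip hf _ _) _; rewrite ?le_max ?lexx ?orbT //.
apply: le_lt_trans xt.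
(* |max x 0 - max t 0| <= |x - t| *)
case: (leP 0 x) => x0; case: (leP 0 t) => t0.
- by [].
- rewrite subr0 !ger0_norm //; lra.
- rewrite sub0r normrN (ger0_norm t0) distrC ger0_norm; lra.
- by rewrite subrr normr0.
Qed.

Lemma Y0 w : 0 <= Y w. Proof. exact: hY.2. Qed.
Lemma YLp : Lp P p Y. Proof. exact: hY.1. Qed.

Let M0 := Num.max M 0.
Lemma M0_ge0 : 0 <= M0. Proof. by rewrite le_max lexx orbT. Qed.

Lemma ZLp : Lp P p Z.
Proof.
apply: (Lp_dom hp hZm (Lp_cst P hp M0)).
apply: filterS2 hZ0 hZM => w z0 zM.
rewrite ger0_norm // ger0_norm ?M0_ge0 //.
by apply: (le_trans zM); rewrite le_max lexx.
Qed.

Definition Z' := fun w => Num.min (Num.max (Z w) 0) M0.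

Lemma Z'_meas : measurable_fun setT Z'.
Proof.
apply: measurable_minr; last exact: measurable_cst.
by apply: measurable_maxr => //; exact: measurable_cst.
Qed.

Lemma Z'_bnd w : 0 <= Z' w <= M0.
Proof.
rewrite /Z' ge_min lexx orbT andbT le_min M0_ge0 andbT.
by rewrite le_max lexx orbT.
Qed.

Lemma Z'_ae : {ae P, forall w, Z w = Z' w}.
Proof.
apply: filterS2 hZ0 hZM => w z0 zM.
rewrite /Z' max_l // min_l //.
by apply: (le_trans zM); rewrite le_max lexx.
Qed.

Lemma Lp_ae (X X' : T -> R) : measurable_fun setT X' -> Lp P p X ->
  {ae P, forall w, X w = X' w} -> Lp P p X'.
Proof.
move=> mX' hX H; apply: (Lp_dom hp mX' hX).
by apply: filterS H => w ->.
Qed.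

Lemma rho_ae (X X' : T -> R) : Lp P p X -> Lp P p X' ->
  {ae P, forall w, X w = X' w} -> rho X = rho X'.
Proof.
move=> hX hX' H; apply: rho_li => // B mB.
case: H => N [mN PN HN].
have mXB : measurable (X @^-1` B) by rewrite -[X @^-1` B]setTI; exact: hX.1.
have mX'B : measurable (X' @^-1` B) by rewrite -[X' @^-1` B]setTI; exact: hX'.1.
apply/eqP; rewrite eq_le; apply/andP; split.
- rewrite -(@measureU0 _ _ _ P _ _ mX'B mN PN); apply: le_measure; rewrite ?inE //.
    exact: measurableU.
  move=> w /= Bw; case: (pselect (X w = X' w)) => e.
    by left; rewrite /= -e.
  by right; apply: HN.
- rewrite -(@measureU0 _ _ _ P _ _ mXB mN PN); apply: le_measure; rewrite ?inE //.
    exact: measurableU.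
  move=> w /= Bw; case: (pselect (X w = X' w)) => e.
    by left; rewrite /= e.
  by right; apply: HN.
Qed.

Lemma Xf_meas (f : R -> R) : Fset f -> measurable_fun setT (fun w => f (Y w) - Z w).
Proof. move=> hf; apply: measurable_funB => //; exact: F_meas. Qed.

Lemma Xf_Lp (f : R -> R) : Fset f -> Lp P p (fun w => f (Y w) - Z w).
Proof.
move=> hf; apply: (Lp_dom hp (Xf_meas hf) (Lp_add hp (Lp_abs hp YLp) (Lp_abs hp ZLp))).
apply: aeW => w.
have [a b] := hf.1 (Y w) (Y0 w).
rewrite (ger0_norm (addr_ge0 (normr_ge0 _) (normr_ge0 _))).
apply: (le_trans (ler_normB _ _)); rewrite lerD2r ger0_norm //.
by rewrite ger0_norm // Y0.
Qed.

Lemma Xf'_Lp (f : R -> R) : Fset f -> Lp P p (fun w => f (Y w) - Z' w).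
Proof.
move=> hf; apply: (Lp_ae _ (Xf_Lp hf)).
  apply: measurable_funB => //; [exact: F_meas | exact: Z'_meas].
by apply: filterS Z'_ae => w ->.
Qed.

Lemma Yf_Lpplus (f : R -> R) : Fset f -> Lpplus P p (fun w => Y w - f (Y w)).
Proof.
move=> hf; have H w := hf.1 (Y w) (Y0 w).
split; last by move=> w; rewrite subr_ge0; exact: (H w).2.
apply: (Lp_dom hp _ YLp).
  apply: measurable_funB => //; [exact: YLp.1 | exact: F_meas].
apply: aeW => w; rewrite !ger0_norm ?Y0 ?subr_ge0 ?(H w).2 //.
by rewrite lerBlDr lerDl (H w).1.
Qed.

Lemma cst0_Lpplus : Lpplus P p (fun _ => 0).
Proof. by split => //; exact: Lp_cst. Qed.

Lemma cst0_Lp : Lp P p (fun _ => 0).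
Proof. exact: Lp_cst. Qed.

Lemma piRY_ge0 : (0 <= piR Y)%E.
Proof. rewrite -piR0; apply: piR_mono => //; [exact: cst0_Lpplus | exact: Y0]. Qed.

Lemma piRY_fin : piR Y \is a fin_num.
Proof.
rewrite fin_numE; apply/andP; split.
  by rewrite gt_eqF // (lt_le_trans _ piRY_ge0) // ltNye.
by rewrite lt_eqF.
Qed.

Lemma piRf_bnd (f : R -> R) : Fset f ->
  piR (fun w => Y w - f (Y w)) = (piRf piR Y f)%:E /\
  0 <= piRf piR Y f <= fine (piR Y).
Proof.
move=> hf.
have lo : (0 <= piR (fun w => (Y w - f (Y w))%R))%E.
  rewrite -piR0; apply: piR_mono; [exact: cst0_Lpplus| exact: Yf_Lpplus|].
  by move=> w; rewrite subr_ge0; exact: (hf.1 _ (Y0 w)).2.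
have up : (piR (fun w => (Y w - f (Y w))%R) <= piR Y)%E.
  apply: piR_mono; [exact: Yf_Lpplus| exact: hY|].
  by move=> w; rewrite lerBlDr lerDl; exact: (hf.1 _ (Y0 w)).1.
have fin : piR (fun w => Y w - f (Y w)) \is a fin_num.
  rewrite fin_numE; apply/andP; split.
    by rewrite gt_eqF // (lt_le_trans _ lo) // ltNye.
  by rewrite lt_eqF // (le_lt_trans up).
rewrite /piRf fineK //; split => //.
by rewrite fine_ge0 //= fine_le // piRY_fin.
Qed.

Lemma rhoY_ge0 : (0 <= rho Y)%E.
Proof. rewrite -rho0; apply: rho_mon.1 => //; [exact: cst0_Lp | exact: YLp | exact: Y0]. Qed.

Lemma rhoY_fin : rho Y \is a fin_num.
Proof.
rewrite fin_numE; apply/andP; split.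
  by rewrite gt_eqF // (lt_le_trans _ rhoY_ge0) // ltNye.
by rewrite lt_eqF.
Qed.

Lemma rho_cst (a : R) : rho (fun _ => a) = a%:E.
Proof.
have -> : (fun _ : T => a) = (fun w => (fun _ => 0) w + a) by apply: funext => w; rewrite add0r.
by rewrite rho_mon.2 ?rho0 ?add0e //; exact: cst0_Lp.
Qed.

Lemma rhoX_bnd (f : R -> R) : Fset f ->
  ((- M0)%:E <= rho (fun w => (f (Y w) - Z w)%R) <= rho Y)%E.
Proof.
move=> hf; rewrite (rho_ae (Xf_Lp hf) (Xf'_Lp hf)); last first.
  by apply: filterS Z'_ae => w ->.
apply/andP; split.
- rewrite -rho_cst; apply: rho_mon.1; [exact: Lp_cst| exact: Xf'_Lp|].
  move=> w; have [a _] := hf.1 _ (Y0 w); have /andP[_ b] := Z'_bnd w; lra.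
- apply: rho_mon.1; [exact: Xf'_Lp| exact: YLp|].
  move=> w; have [_ a] := hf.1 _ (Y0 w); have /andP[b _] := Z'_bnd w; lra.
Qed.

Lemma rhoX_fin (f : R -> R) : Fset f ->
  rho (fun w => (f (Y w) - Z w)%R) \is a fin_num.
Proof.
move=> hf; have /andP[a b] := rhoX_bnd hf.
rewrite fin_numE; apply/andP; split.
  by rewrite gt_eqF // (lt_le_trans _ a) // ltNyr.
by rewrite lt_eqF // (le_lt_trans b).
Qed.

Definition gval (f : R -> R) :=
  fine (rho (fun w => (f (Y w) - Z w)%R)) + piRf piR Y f.

Lemma G_eq (f : R -> R) : Fset f ->
  static_obj rho piR Y Z f = (gval f)%:E /\
  - M0 <= gval f <= fine (rho Y) + fine (piR Y).
Proof.
move=> hf; rewrite /static_obj /gval.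
rewrite -{1}(fineK (rhoX_fin hf)); split => //.
have /andP[a b] := rhoX_bnd hf; have [_ /andP[c1 c2]] := piRf_bnd hf.
have a' : - M0 <= fine (rho (fun w => (f (Y w) - Z w)%R)).
  by rewrite -lee_fin (fineK (rhoX_fin hf)).
have b' : fine (rho (fun w => (f (Y w) - Z w)%R)) <= fine (rho Y).
  by rewrite fine_le // ?rhoX_fin // rhoY_fin.
apply/andP; split; lra.
Qed.

Lemma Fset0 : Fset (fun _ : R => 0).
Proof. by split; [move=> t t0; split | split => s t s0 st; lra]. Qed.

Definition cinf := ereal_inf [set static_obj rho piR Y Z f | f in Fset].

Lemma cinf_fin : cinf \is a fin_num.
Proof.
have lb : ((- M0)%:E <= cinf)%E.
  apply: le_ereal_inf_tmp => _ [f hf <-]; have [-> /andP[a _]] := G_eq hf.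
  by rewrite lee_fin.
have ub : (cinf <= static_obj rho piR Y Z (fun _ => 0%R))%E.
  by apply: ereal_inf_lbound; exists (fun _ => 0%R) => //; exact: Fset0.
rewrite fin_numE; apply/andP; split.
  by rewrite gt_eqF // (lt_le_trans _ lb) // ltNyr.
rewrite lt_eqF // (le_lt_trans ub) //.
by have [-> _] := G_eq Fset0; rewrite ltry.
Qed.

Definition cval := fine cinf.

Lemma c_lb (f : R -> R) : Fset f -> cval <= gval f.
Proof.
move=> hf; rewrite -lee_fin /cval (fineK cinf_fin).
have [<- _] := G_eq hf; apply: ereal_inf_lbound; by exists f.
Qed.

Lemma c_approx e : 0 < e -> exists f, Fset f /\ gval f < cval + e.
Proof.
move=> e0.
have : (cinf < (cval + e)%:E)%E by rewrite /cval EFinD (fineK cinf_fin) lteDl ?cinf_fin ?lte_fin.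
move=> /ereal_inf_lt [_ [f hf <-]]; have [-> _] := G_eq hf.
by rewrite lte_fin => h; exists f.
Qed.

Lemma Top_affine (f : R -> R) (a b x : R) (v : R -> R) : Fset f -> 0 <= b ->
  (forall y, v y = a - y * b) ->
  Top rho piR Y Z beta f v x =
  ((1 + beta * b) * gval f + beta * a - (1 + beta * b) * x)%:E.
Proof.
move=> hf b0 hv; rewrite /Top.
set l := 1 + beta * b.
have l0 : 0 <= l by rewrite /l addr_ge0 // mulr_ge0.
set K := l * piRf piR Y f - l * x + beta * a.
have -> : (fun w => f (Y w) + piRf piR Y f - Z w - x +
     beta * v (x + Z w - f (Y w) - piRf piR Y f)) =
     (fun w => (fun w => l * (f (Y w) - Z w)) w + K).
  apply: funext => w; rewrite hv /K /l; ring.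
rewrite rho_mon.2; last exact: Lp_scale (Xf_Lp hf).
rewrite rho_hom //; last exact: Xf_Lp.
rewrite -(fineK (rhoX_fin hf)) -EFinM -EFinD; congr EFin.
rewrite /gval /K; ring.
Qed.

Lemma Top_Jfin (f : R -> R) N n x : (n < N)%N -> Fset f ->
  Top rho piR Y Z beta f (Jfin cval beta N n.+1) x =
  (Jfin cval beta N n x + S0 beta (N - n) * (gval f - cval))%:E.
Proof.
move=> nN hf.
rewrite (@Top_affine f (cval * S1 beta (N - n.+1)) (S0 beta (N - n.+1))) //; last exact: S0_ge0.
rewrite /Jfin -/(S0 beta _) -/(S1 beta _) -(subnSK nN) S1S S0S; congr EFin; ring.
Qed.

Lemma polval_const (fs : R -> R) : Fset fs -> gval fs = cval ->
  forall m k x, polval rho piR Y Z beta (fun _ _ => fs) k m x =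
    (cval * S1 beta m - x * S0 beta m)%:E.
Proof.
move=> hf gfs; elim => [|m IH] k x /=.
  by rewrite /S1 /S0 !big_geq // !mulr0 subrr.
rewrite (@Top_affine fs (cval * S1 beta m) (S0 beta m)) //; last first.
- by move=> y; rewrite IH.
- exact: S0_ge0.
congr EFin; rewrite S1S S0S gfs; ring.
Qed.

Lemma norm_between (l a u : R) : l <= a -> a <= u -> `|a| <= `|l| + `|u|.
Proof.
move=> la au; have h1 := ler_norm l; have h2 := lerNnormlW (lexx `|l|).
have h3 := ler_norm u; have h4 := lerNnormlW (lexx `|u|).
have h5 := normr_ge0 l; have h6 := normr_ge0 u.
rewrite ler_norml; apply/andP; split; lra.
Qed.

Definition Cup := fine (rho Y) + fine (piR Y).

Lemma Arg_aff_Lp (f : R -> R) (a b x : R) (v : R -> R) : Fset f ->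
  (forall y, v y = a - y * b) ->
  Lp P p (fun w => f (Y w) + piRf piR Y f - Z w - x +
     beta * v (x + Z w - f (Y w) - piRf piR Y f)).
Proof.
move=> hf hv.
have -> : (fun w => f (Y w) + piRf piR Y f - Z w - x +
     beta * v (x + Z w - f (Y w) - piRf piR Y f)) =
     (fun w => (fun w => (1 + beta * b) * (f (Y w) - Z w)) w +
       (fun _ => (1 + beta * b) * piRf piR Y f - (1 + beta * b) * x + beta * a) w).
  by apply: funext => w; rewrite hv; ring.
apply: Lp_add => //; [exact: Lp_scale (Xf_Lp hf) | exact: Lp_cst].
Qed.

Lemma pol_bounds (pol : nat -> R -> R -> R) :
  admissible_policy rho piR Y Z beta pol ->
  forall m k y, ((cval * S1 beta m - y * S0 beta m)%:E <=
     polval rho piR Y Z beta pol k m y <= (Cup * S1 beta m - y * S0 beta m)%:E)%E.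
Proof.
move=> [hF [hfin hmeas]]; elim => [|m IH] k y /=.
  by rewrite /S1 /S0 !big_geq // !mulr0 subrr lexx.
set f := pol k y; have hf : Fset f := hF k y.
set v := fun z => fine (polval rho piR Y Z beta pol k.+1 m z).
set L := fun z => cval * S1 beta m - z * S0 beta m.
set U := fun z => Cup * S1 beta m - z * S0 beta m.
have hv z : L z <= v z <= U z.
  have /andP[a b] := IH k.+1 z.
  by rewrite /v -!lee_fin fineK ?hfin // a b.
set pi := piRf piR Y f.
pose Arg (g : R -> R) := fun w => f (Y w) + pi - Z w - y + beta * g (y + Z w - f (Y w) - pi).
have LpL : Lp P p (Arg L) by exact: (@Arg_aff_Lp f (cval * S1 beta m) (S0 beta m) y L hf (fun _ => erefl)).
have LpU : Lp P p (Arg U) by exact: (@Arg_aff_Lp f (Cup * S1 beta m) (S0 beta m) y U hf (fun _ => erefl)).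
have mV : measurable_fun setT (Arg v).
  apply: measurable_funD.
    apply: measurable_funB => //; apply: measurable_funB => //.
    by apply: measurable_funD => //; exact: F_meas.
  apply: measurable_funM => //; apply: measurableT_comp; first exact: hmeas.
  apply: measurable_funB => //.
  apply: measurable_funB; [by apply: measurable_funD | exact: F_meas].
have ptw w : Arg L w <= Arg v w <= Arg U w.
  have /andP[a b] := hv (y + Z w - f (Y w) - pi).
  rewrite /Arg lerD2l andbC lerD2l; apply/andP; split; exact: ler_wpM2l.
have LpV : Lp P p (Arg v).
  apply: (Lp_dom hp mV (Lp_add hp (Lp_abs hp LpL) (Lp_abs hp LpU))).
  apply: aeW => w; have /andP[a b] := ptw w.
  rewrite (ger0_norm (addr_ge0 (normr_ge0 _) (normr_ge0 _))).
  exact: norm_between a b.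
have lo : (Top rho piR Y Z beta f L y <= Top rho piR Y Z beta f v y)%E.
  by apply: rho_mon.1 => // w; have /andP[] := ptw w.
have up : (Top rho piR Y Z beta f v y <= Top rho piR Y Z beta f U y)%E.
  by apply: rho_mon.1 => // w; have /andP[] := ptw w.
have [_ /andP[_ gC]] := G_eq hf.
have cg := c_lb hf.
have s0 := S0_ge0 m hb.
apply/andP; split.
- apply: le_trans lo; rewrite (@Top_affine f (cval * S1 beta m) (S0 beta m)) //.
  rewrite lee_fin S1S S0S.
  have : 0 <= (1 + beta * S0 beta m) * (gval f - cval).
    by apply: mulr_ge0; [rewrite addr_ge0 // mulr_ge0 | rewrite subr_ge0].
  lra.
- apply: le_trans up _; rewrite (@Top_affine f (Cup * S1 beta m) (S0 beta m)) //.
  rewrite lee_fin S1S S0S.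
  have : 0 <= (1 + beta * S0 beta m) * (Cup - gval f).
    by apply: mulr_ge0; [rewrite addr_ge0 // mulr_ge0 | rewrite subr_ge0].
  lra.
Qed.

Lemma exists_min : exists fs, Fset fs /\ gval fs = cval.
Proof.
have norm g : Fset g -> exists h, Fset h /\ (forall t, 0 <= h t <= Num.max t 0) /\ gval h = gval g.
  move=> hg; exists (fun t => g (Num.max t 0)); split; [|split].
  - split; [|split].
    + by move=> t t0; rewrite max_l //; exact: hg.1.
    + by move=> s t s0 st; rewrite !max_l //; [exact: hg.2.1 | exact: le_trans st].
    + by move=> s t s0 st; rewrite !max_l //; [exact: hg.2.2 | exact: le_trans st].
  - move=> t; case: (leP 0 t) => t0.
      by have [a b] := hg.1 t t0; rewrite a b.
    by have [a b] := hg.1 0 (lexx 0); apply/andP; split => //; lra.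
  - have E : (fun w => g (Num.max (Y w) 0)) = (fun w => g (Y w)).
      by apply: funext => w; rewrite max_l // Y0.
    rewrite /gval /piRf.
    have E1 : (fun w => (g (Num.max (Y w) 0) - Z w)%R) = (fun w => (g (Y w) - Z w)%R).
      by apply: funext => w; rewrite max_l // Y0.
    have E2 : (fun w => (Y w - g (Num.max (Y w) 0))%R) = (fun w => (Y w - g (Y w))%R).
      by apply: funext => w; rewrite max_l // Y0.
    by rewrite E1 E2.
pose S n := [set g : R -> R | Fset g /\ (forall t, 0 <= g t <= Num.max t 0) /\
   gval g < cval + (n.+1%:R)^-1].
have Sne n : S n !=set0.
  have [g [hg hgc]] : exists f, Fset f /\ gval f < cval + (n.+1%:R)^-1 by apply: c_approx; rewrite invr_gt0.
  have [h [hh [hK he]]] := norm g hg; exists h; split => //; split => //.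
  by rewrite he.
have Sdec n m : (m <= n)%N -> S n `<=` S m.
  move=> mn g [hg [hK hl]]; split => //; split => //.
  apply: (lt_le_trans hl); rewrite lerD2l lef_pV2 ?posrE ?ltr0n // ler_nat.
  by rewrite ltnS.
have SK n g : S n g -> forall t, 0 <= g t <= Num.max t 0 by move=> [_ []].
have [f [fK fap]] := cluster_exists Sne Sdec SK.
have close2 (s t : R) (e : R) : 0 < e -> exists g, Fset g /\
    `|g s - f s| < e /\ `|g t - f t| < e.
  move=> e0; have [g [[hg _] H]] := fap 0%N 2%N (fun k => if k is 0%N then s else t) e e0.
  by exists g; split => //; split; [exact: (H 0%N) | exact: (H 1%N)].
have hf : Fset f.
  split; [|split].
  - move=> t t0; have /andP[a b] := fK t; split => //; by rewrite max_l in b.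
  - move=> s t s0 st; apply/ler_addgt0Pr => e e0.
    have [g [hg [h1 h2]]] := close2 s t (e / 2) (divr_gt0 e0 (ltr0Sn _ 1)).
    have := hg.2.1 s t s0 st.
    move: h1 h2; rewrite !ltr_norml => /andP[h1 h1'] /andP[h2 h2']; lra.
  - move=> s t s0 st; apply/ler_addgt0Pr => e e0.
    have [g [hg [h1 h2]]] := close2 s t (e / 2) (divr_gt0 e0 (ltr0Sn _ 1)).
    have := hg.2.2 s t s0 st.
    move: h1 h2; rewrite !ltr_norml => /andP[h1 h1'] /andP[h2 h2']; lra.
exists f; split => //.
apply/eqP; rewrite eq_le c_lb // andbT.
pose grid (j k : nat) : R := k%:R / j.+1%:R.
have /choice [gs Hgs] : forall j : nat, exists g, S j g /\
    forall k, (k < j.+1 * j.+1)%N -> `|g (grid j k) - f (grid j k)| < j.+1%:R^-1.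
  by move=> j; apply: fap; rewrite invr_gt0.
have gsF j : Fset (gs j) := (Hgs j).1.1.
have gs_cvg t : 0 <= t -> (fun j => gs j t) @ \oo --> f t.
  move=> t0; apply/cvgrPdist_lt => e e0.
  near=> j.
  have tj : t < j%:R by near: j; exact: nbhs_infty_gtr.
  have ej : 3 / e < j%:R by near: j; exact: nbhs_infty_gtr.
  have jp : 0 < j.+1%:R :> R by rewrite ltr0n.
  pose i := j.+1%:R^-1 : R.
  have ip : 0 < i by rewrite invr_gt0.
  have h3 : 3 < e * j.+1%:R.
    have := ej; rewrite ltr_pdivrMr // => h.
    have -> : j.+1%:R = j%:R + 1 :> R by rewrite natr1.
    rewrite mulrDr mulr1; rewrite mulrC in h; lra.
  have ie : 3 * i < e.
    by rewrite /i -/(3 / _) ltr_pdivrMr.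
  have tj1 : 0 <= t * j.+1%:R by rewrite mulr_ge0 // ltW.
  set k := Num.truncn (t * j.+1%:R).
  have /andP[kl ku] := truncn_itv tj1; rewrite -/k in kl ku.
  set q := grid j k.
  have hq : q = k%:R * i by [].
  have q0 : 0 <= q by rewrite hq mulr_ge0 // ltW.
  have hqt : `|t - q| < i.
    have -> : t - q = (t * j.+1%:R - k%:R) * i by rewrite hq /i; field; rewrite gt_eqF.
    rewrite normrM (gtr0_norm ip) ger0_norm ?subr_ge0 //.
    rewrite -[ltRHS]mul1r ltr_pM2r //; rewrite -natr1 in ku; lra.
  have hk : (k < j.+1 * j.+1)%N.
    rewrite -(ltr_nat R) natrM; apply: le_lt_trans kl _.
    by rewrite ltr_pM2r // (lt_le_trans tj) // ler_nat.
  have C1 := (Hgs j).2 k hk; rewrite -/q -/i in C1.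
  have A1 := F_lip (gsF j) t0 q0.
  have B1 := F_lip hf t0 q0.
  have dd0 := normr_ge0 (t - q).
  move: A1 B1 C1; rewrite !ler_norml ltr_norml => /andP[a1 a2] /andP[b1 b2] /andP[c1 c2].
  rewrite ltr_norml; apply/andP; split; lra.
have Xdom g w : Fset g -> `|g (Y w) - Z w| <= `|Y w| + `|Z w|.
  move=> hg; have [a b] := hg.1 (Y w) (Y0 w).
  apply: (le_trans (ler_normB _ _)); rewrite lerD2r ger0_norm //.
  by rewrite ger0_norm // Y0.
have Ydom g w : Fset g -> `|Y w - g (Y w)| <= Y w.
  move=> hg; have [a b] := hg.1 (Y w) (Y0 w).
  rewrite ger0_norm ?subr_ge0 //; lra.
have F1 := @rho_fatou (fun k w => (gs k (Y w) - Z w)%R) (fun w => (f (Y w) - Z w)%R)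
  (fun w => `|Y w| + `|Z w|) (fun k => Xf_Lp (gsF k)) (Xf_Lp hf)
  (Lp_add hp (Lp_abs hp YLp) (Lp_abs hp ZLp))
  (aeW P (fun w => cvgB (gs_cvg _ (Y0 w)) (cvg_cst (Z w))))
  (fun k => aeW P (fun w => Xdom (gs k) w (gsF k))).
have F2 := @piR_fatou (fun k w => (Y w - gs k (Y w))%R) (fun w => (Y w - f (Y w))%R)
  Y (fun k => Yf_Lpplus (gsF k)) (Yf_Lpplus hf) hY
  (aeW P (fun w => cvgB (cvg_cst (Y w)) (gs_cvg _ (Y0 w))))
  (fun k => aeW P (fun w => Ydom (gs k) w (gsF k))).
rewrite leNgt; apply/negP => hlt.
set e := (gval f - cval) / 3.
have e0 : 0 < e by rewrite divr_gt0 // subr_gt0.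
set a := fine (rho (fun w => (f (Y w) - Z w)%R)).
have [hpi _] := piRf_bnd hf.
have ha : ((a - e)%:E < limn_einf (fun k => rho (fun w => (gs k (Y w) - Z w)%R)))%E.
  apply: (lt_le_trans _ (F1 _ _)); rewrite -(fineK (rhoX_fin hf)) lte_fin -/a; lra.
have hb' : ((piRf piR Y f - e)%:E < limn_einf (fun k => piR (fun w => (Y w - gs k (Y w))%R)))%E.
  apply: (lt_le_trans _ (F2 _ _)); rewrite hpi lte_fin; lra.
have H1 := einf_gt ha; have H2 := einf_gt hb'.
have H3 : \forall k \near \oo, e^-1 < k%:R by exact: nbhs_infty_gtr.
have [k [[h1 h2] h3]] := filter_ex (filterI (filterI H1 H2) H3).
have [hpk _] := piRf_bnd (gsF k).
move: h1 h2; rewrite -(fineK (rhoX_fin (gsF k))) hpk !lte_fin => h1 h2.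
have hk := (Hgs k).1.2.2.
have hke : k.+1%:R^-1 < e.
  rewrite invf_plt ?posrE ?ltr0n //.
  apply: lt_le_trans (_ : e^-1 < k%:R) _ => //.
  by rewrite ler_nat.
move: hk; rewrite /gval -/a => hk.
have : gval f = a + piRf piR Y f by [].
have e3 : 3 * e = gval f - cval by rewrite /e; field.
clearbody e a.
set r := fine (rho (fun w => (gs k (Y w) - Z w)%R)) in h1 hk.
set s := piRf piR Y (gs k) in h2 hk.
set b := piRf piR Y f in h2 *.
set G := gval f in e3 hlt *.
set ii := k.+1%:R^-1 in hk hke.
clearbody r s b G ii.
lra.
Unshelve. all: by end_near.
Qed.

Lemma main_sec : exists (fstar : R -> R) (c : R),
    [/\ Fset fstar /\ static_obj rho piR Y Z fstar = c%:E /\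
        (forall f, Fset f -> (c%:E <= static_obj rho piR Y Z f)%E),
        (forall (N n : nat) (x : R), (n < N)%N ->
           (Jfin c beta N n x)%:E =
             ereal_inf [set Top rho piR Y Z beta f (Jfin c beta N n.+1) x | f in Fset]%classic
           /\ (Jfin c beta N n x)%:E = Top rho piR Y Z beta fstar (Jfin c beta N n.+1) x)
        & (beta < 1 -> rm_proper (Lp P p) rho -> rm_subadditive (Lp P p) rho ->
         forall x : R,
           let Jinf := c / (1 - beta) ^+ 2 - x / (1 - beta) in
           seq_cvg_to (fun N => Jfin c beta N 0 x) Jinf
           /\ eseq_cvg_to (fun N => horizon_val rho piR Y Z beta (fun _ _ => fstar) N x)
                 Jinf%:E
           /\ (forall pol (l : \bar R),
                 admissible_policy rho piR Y Z beta pol ->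
                 eseq_cvg_to (fun N => horizon_val rho piR Y Z beta pol N x) l ->
                 (Jinf%:E <= l)%E))].
Proof.
have [fs [hfs gfs]] := exists_min.
exists fs, cval; split.
- split => //; split; first by have [-> _] := G_eq hfs; rewrite gfs.
  by move=> f hf; have [-> _] := G_eq hf; rewrite lee_fin; exact: c_lb.
- move=> N n x nN.
  have E : (Jfin cval beta N n x)%:E = Top rho piR Y Z beta fs (Jfin cval beta N n.+1) x.
    by rewrite Top_Jfin // gfs subrr mulr0 addr0.
  split => //; apply/eqP; rewrite eq_le; apply/andP; split.
  + apply: le_ereal_inf_tmp => _ [f hf <-]; rewrite Top_Jfin // lee_fin lerDl.
    by apply: mulr_ge0; [exact: S0_ge0 | rewrite subr_ge0; exact: c_lb].
  + by rewrite E; apply: ereal_inf_lbound; exists fs.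
- move=> b1 _ _ x Jinf; split; first exact: Jfin_lim.
  have hJ : (fun N => (Jfin cval beta N 0 x)%:E) @ \oo --> Jinf%:E.
    apply: cvg_EFin; first exact: nearW.
    exact: Jfin_lim.
  split.
  + rewrite /eseq_cvg_to.
    have -> : (fun N => horizon_val rho piR Y Z beta (fun _ _ => fs) N x) =
        (fun N => (Jfin cval beta N 0 x)%:E).
      by apply: funext => N; rewrite /horizon_val polval_const // /Jfin subn0.
    exact: hJ.
  + move=> pol l adm hl.
    apply: (lee_cvg_to hJ hl); apply: nearW => N.
    have /andP[a _] := pol_bounds adm N 0 x.
    by rewrite /Jfin subn0.
Qed.

End Model.

Theorem mainTheorem11 (R : realType) (d : measure_display) (T : measurableType d)
  (P : probability T R) (p : R) (Y Z : T -> R)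
  (rho piR : (T -> R) -> \bar R) (beta : R) :
  1 <= p ->
  (* Y in L^p_+, Z in L^oo_+ *)
  Lpplus P p Y ->
  measurable_fun setT Z -> {ae P, forall w, 0 <= Z w} ->
  (exists M : R, {ae P, forall w, Z w <= M}) ->
  (* premium principle *)
  rm_law_invariant P (Lpplus P p) piR -> rm_monotone (Lpplus P p) piR ->
  rm_normalized piR -> rm_fatou P (Lpplus P p) piR -> (piR Y < +oo)%E ->
  (* risk measure *)
  rm_law_invariant P (Lp P p) rho -> rm_normalized rho -> rm_monetary (Lp P p) rho ->
  rm_pos_homogeneous (Lp P p) rho -> rm_fatou P (Lp P p) rho -> (rho Y < +oo)%E ->
  0 < beta <= 1 ->
  exists (fstar : R -> R) (c : R),
    [/\ (* fstar minimizes the static problem, with minimal value c *)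
        Fset fstar /\ static_obj rho piR Y Z fstar = c%:E /\
        (forall f, Fset f -> (c%:E <= static_obj rho piR Y Z f)%E),
        (* finite horizon: the J_n given by the formula satisfy the Bellman
           recursion J_N = 0, J_n = inf_{f in F} T_f J_{n+1} ... *)
        (forall (N n : nat) (x : R), (n < N)%N ->
           (Jfin c beta N n x)%:E =
             ereal_inf [set Top rho piR Y Z beta f (Jfin c beta N n.+1) x | f in Fset]%classic
           (* ... and the constant decision fstar attains the infimum, so the
              constant policy (fstar,...,fstar) has value J_n at every time n *)
           /\ (Jfin c beta N n x)%:E = Top rho piR Y Z beta fstar (Jfin c beta N n.+1) x)
        & (* infinite horizon *)
        (beta < 1 -> rm_proper (Lp P p) rho -> rm_subadditive (Lp P p) rho ->
         forall x : R,
           let Jinf := c / (1 - beta) ^+ 2 - x / (1 - beta) in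
           (* J = lim_N J_N *)
           seq_cvg_to (fun N => Jfin c beta N 0 x) Jinf
           (* the stationary policy (fstar, fstar, ...) has infinite-horizon value J *)
           /\ eseq_cvg_to (fun N => horizon_val rho piR Y Z beta (fun _ _ => fstar) N x)
                 Jinf%:E
           (* and it is optimal among Markov policies *)
           /\ (forall pol (l : \bar R),
                 admissible_policy rho piR Y Z beta pol ->
                 eseq_cvg_to (fun N => horizon_val rho piR Y Z beta pol N x) l ->
                 (Jinf%:E <= l)%E))].
Proof.
move=> hp hY hZm hZ0 [M hZM] _ piR_mono piR0 piR_fatou piRY rho_li rho0 rho_mon rho_hom rho_fatou rhoY /andP[b0 _].
exact: (main_sec hp hY hZm hZ0 hZM piR_mono piR0 piRY rho_li rho0 rho_mon rho_hom rhoY (ltW b0) piR_fatou rho_fatou).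
Qed.
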